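(* Let $h:\{0,1,2,3\}^*\to\{0,1,2,3\}^*$ be the $11$-uniform morphism defined by $h(0)=01312021310$, $h(1)=12023132021$, $h(2)=23130203132$, $h(3)=30201310203$. Then every letter image $h(a)$ is a palindrome, and the infinite fixed point $h^\omega(0)=\lim_{n\to\infty}h^n(0)$ contains no factor that is a $(p/q)$-power with $p/q>\tfrac32$. Consequently, for every $n\ge1$, $h^n(0)$ is a palindrome of length $11^n$ with critical exponent $\tfrac32$.
   Context: A word $x=x[1..n]$ has period $q$ if $x[i]=x[i+q]$ for $1\le i\le n-q$. For integers $p>q\ge1$, $x$ is a $(p/q)$-power if it has length $p$ and period $q$. The critical exponent of a word is the maximum, over its nonempty factors $w'$, of the largest $p/q$ such that $w'$ is a $(p/q)$-power. Since $h(0)$ begins with $0$, the words $h^n(0)$ are prefixes of one another and define the infinite fixed point $h^\omega(0)$. *)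

(* Defs.v *)
From mathcomp Require Import all_boot all_order all_algebra.
Set Implicit Arguments. Unset Strict Implicit. Unset Printing Implicit Defensive.
Import Order.TTheory GRing.Theory Num.Theory.

(* letter images of the 11-uniform morphism h (letters >= 4 never occur) *)
Definition h_letter (a : nat) : seq nat :=
  match a with
  | 0 => [:: 0; 1; 3; 1; 2; 0; 2; 1; 3; 1; 0]
  | 1 => [:: 1; 2; 0; 2; 3; 1; 3; 2; 0; 2; 1]
  | 2 => [:: 2; 3; 1; 3; 0; 2; 0; 3; 1; 3; 2]
  | 3 => [:: 3; 0; 2; 0; 1; 3; 1; 0; 2; 0; 3]
  | _ => [::]
  end.

Definition h (w : seq nat) : seq nat := flatten (map h_letter w).

Definition hn (n : nat) : seq nat := iter n h [:: 0].

(* the infinite fixed point h^omega(0), as a function nat -> letter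
   (0-indexed); position i is read off h^(i+1)(0), which has length
   11^(i+1) > i. *)
Definition hw (i : nat) : nat := nth 0 (hn i.+1) i.

Definition palindrome (w : seq nat) : bool := rev w == w.

(* x has period q (0-indexed version of x[i] = x[i+q], 1 <= i <= |x|-q) *)
Definition has_period (x : seq nat) (q : nat) : Prop :=
  forall i, i + q < size x -> nth 0 x i = nth 0 x (i + q).

Definition is_power (x : seq nat) (p q : nat) : Prop :=
  [/\ 0 < q, q < p, size x = p & has_period x q].

Definition hw_factor (i p : nat) : seq nat := mkseq (fun k => hw (i + k)) p.

Definition critical_exponent_is (w : seq nat) (r : rat) : Prop :=
  (exists x p q, [/\ infix x w, is_power x p q & r = (p%:Q / q%:Q)%R]) /\
  (forall x p q, infix x w -> is_power x p q -> (p%:Q / q%:Q <= r)%R).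

(* Main.v *)
Require Import Defs.
From mathcomp Require Import all_boot all_order all_algebra.
From mathcomp Require Import zify.
Import Order.TTheory GRing.Theory Num.Theory.

Definition cc (k : nat) : nat := nth 0 [:: 0; 1; 3; 1; 2; 0; 2; 1; 3; 1; 0] k.

Lemma h_cat x y : h (x ++ y) = h x ++ h y.
Proof. by rewrite /h map_cat flatten_cat. Qed.

Lemma h_cons a w : h (a :: w) = h_letter a ++ h w.
Proof. by []. Qed.

Lemma h_letter_lt4 a : all (fun x => x < 4) (h_letter a).
Proof. by do 4?[case: a => [|a]]. Qed.

Lemma all_h w : all (fun x => x < 4) (h w).
Proof. by elim: w => //= a w IH; rewrite h_cons all_cat h_letter_lt4. Qed.

Lemma all_hn n : all (fun x => x < 4) (hn n).
Proof. by case: n => //= n; apply: all_h. Qed.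

Lemma size_h w : all (fun x => x < 4) w -> size (h w) = 11 * size w.
Proof.
elim: w => //= a w IH /andP[Ha Hw]; rewrite h_cons size_cat IH //.
have -> : size (h_letter a) = 11 by do 4?[case: a Ha => [|a] Ha //].
by rewrite mulnS.
Qed.

Lemma size_hn n : size (hn n) = 11 ^ n.
Proof.
elim: n => //= n IH; rewrite size_h ?all_hn // IH expnS //.
Qed.

Lemma hn_prefix n : exists r, hn n.+1 = hn n ++ r.
Proof.
elim: n => [|n [r IH]]; first by exists (behead (h_letter 0)).
exists (h r); change (h (hn n.+1) = h (hn n) ++ h r); by rewrite IH h_cat.
Qed.

Lemma hn_prefix_le m m' : m <= m' -> exists r, hn m' = hn m ++ r.
Proof.
elim: m' => [|m' IH]; first by rewrite leqn0 => /eqP->; exists [::]; rewrite cats0.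
rewrite leq_eqVlt => /orP[/eqP->|]; first by exists [::]; rewrite cats0.
rewrite ltnS => /IH [r Hr]; have [r' Hr'] := hn_prefix m'.
by exists (r ++ r'); rewrite Hr' Hr catA.
Qed.

Lemma nth_hn n j : j < size (hn n) -> nth 0 (hn n) j = hw j.
Proof.
move=> Hj; rewrite /hw.
have [r1 H1] := @hn_prefix_le _ _ (leq_maxl n j.+1).
have [r2 H2] := @hn_prefix_le _ _ (leq_maxr n j.+1).
have Hj2 : j < size (hn j.+1).
  by rewrite size_hn; apply: (ltn_trans (ltn_expl j (isT : 1 < 11))); rewrite ltn_exp2l.
have E1 : nth 0 (hn (maxn n j.+1)) j = nth 0 (hn n) j by rewrite H1 nth_cat Hj.
have E2 : nth 0 (hn (maxn n j.+1)) j = nth 0 (hn j.+1) j by rewrite H2 nth_cat Hj2.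
by rewrite -E1 E2.
Qed.

Lemma nth_h w n k : all (fun x => x < 4) w -> n < size w -> k < 11 ->
  nth 0 (h w) (11 * n + k) = nth 0 (h_letter (nth 0 w n)) k.
Proof.
elim: w n => //= a w IH n /andP[Ha Hw] Hn Hk.
have Sa : size (h_letter a) = 11 by do 4?[case: a Ha => [|a] Ha //].
rewrite h_cons nth_cat Sa; case: n Hn => [|n] Hn; first by rewrite muln0 add0n Hk.
rewrite ifF; last by apply/negbTE; rewrite -leqNgt; lia.
have -> : 11 * n.+1 + k - 11 = 11 * n + k by lia.
by apply: IH.
Qed.

Lemma h_letter_c a k : a < 4 -> k < 11 -> nth 0 (h_letter a) k = (a + cc k) %% 4.
Proof. by do 4?[case: a => [|a]] => // _; do 11?[case: k => [|k]]. Qed.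

Lemma hw_lt4 n : hw n < 4.
Proof.
rewrite /hw; have := all_hn n.+1 => /allP; apply; apply: mem_nth.
rewrite size_hn; apply: (ltn_trans (ltn_expl n (isT : 1 < 11))); by rewrite ltn_exp2l.
Qed.

Lemma hw_rec n k : k < 11 -> hw (11 * n + k) = (hw n + cc k) %% 4.
Proof.
move=> Hk.
have Hn : n < size (hn n.+1).
  rewrite size_hn; apply: (ltn_trans (ltn_expl n (isT : 1 < 11))); by rewrite ltn_exp2l.
have Hs : 11 * n + k < size (hn n.+2).
  change (11 * n + k < size (h (hn n.+1))); rewrite size_h ?all_hn //; lia.
rewrite -(@nth_hn _ _ Hs); change (nth 0 (h (hn n.+1)) (11 * n + k) = (hw n + cc k) %% 4).
by rewrite nth_h ?all_hn // nth_hn // h_letter_c // hw_lt4.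
Qed.

Lemma hw_neq n : hw n.+1 != hw n.
Proof.
elim/ltn_ind: n => n IH.
have En := divn_eq n 11; have Hm := ltn_pmod n (isT : 0 < 11).
set a := n %/ 11 in En *; set b := n %% 11 in En Hm *.
have [Hb|Hb] := ltnP b 10.
  have E1 : n.+1 = 11 * a + b.+1 by lia.
  have E2 : n = 11 * a + b by lia.
  rewrite E1 E2 !hw_rec //; have := hw_lt4 a.
  move: (hw a) => x; clear -Hb; do 4?[case: x => [|x]] => // _;
  by do 10?[case: b Hb => [|b] Hb].
have Hb10 : b = 10 by lia.
have E1 : n.+1 = 11 * a.+1 + 0 by lia.
have E2 : n = 11 * a + 10 by lia.
rewrite E1 E2 !hw_rec // /cc /= !addn0 !modn_small ?hw_lt4 //.
apply: IH; lia.
Qed.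

Definition Wf (a b e : nat) : nat :=
  if e < 121 then (a + cc (e %/ 11) + cc (e %% 11)) %% 4
  else (b + cc ((e - 121) %/ 11) + cc ((e - 121) %% 11)) %% 4.

Lemma hw2 m e : e < 121 -> hw (121 * m + e) = (hw m + cc (e %/ 11) + cc (e %% 11)) %% 4.
Proof.
move=> He.
have -> : 121 * m + e = 11 * (11 * m + e %/ 11) + e %% 11.
  have := divn_eq e 11; lia.
rewrite hw_rec ?ltn_pmod // hw_rec; last by rewrite ltn_divLR.
by rewrite modnDml.
Qed.

Lemma hwW m e : e < 242 -> hw (121 * m + e) = Wf (hw m) (hw m.+1) e.
Proof.
rewrite /Wf => He; case: ifP => H; first by rewrite hw2.
have -> : 121 * m + e = 121 * m.+1 + (e - 121) by move/negbT: H; lia.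
by rewrite hw2 //; move/negbT: H; lia.
Qed.

Definition basecheck : bool :=
  all (fun a => all (fun b => (a != b) ==> all (fun t => all (fun q =>
    ~~ all (fun k => Wf a b (t + k) == Wf a b (t + k + q)) (iota 0 ((3 * q) %/ 2 + 1 - q)))
    (iota 1 41)) (iota 0 121)) (iota 0 4)) (iota 0 4).

Lemma basecheck_ok : basecheck.
Proof. by vm_compute. Qed.

Definition nondivcheck : bool :=
  all (fun r => all (fun a => all (fun b => all (fun b' =>
    has (fun k => (a + cc k) %% 4 != (if k + r < 11 then (b + cc (k + r)) %% 4
                                      else (b' + cc (k + r - 11)) %% 4)) (iota 0 11))
    (iota 0 4)) (iota 0 4)) (iota 0 4)) (iota 1 10).

Lemma nondivcheck_ok : nondivcheck.
Proof. by vm_compute. Qed.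
Import Order.TTheory GRing.Theory Num.Theory.

Lemma basecheck_spec a b t q : a < 4 -> b < 4 -> a != b -> t < 121 -> 0 < q -> q <= 41 ->
  ~~ all (fun k => Wf a b (t + k) == Wf a b (t + k + q)) (iota 0 ((3 * q) %/ 2 + 1 - q)).
Proof.
move=> Ha Hb Hab Ht Hq0 Hq.
have := basecheck_ok.
move=> /allP /(_ a); rewrite mem_iota Ha => /(_ isT).
move=> /allP /(_ b); rewrite mem_iota Hb => /(_ isT).
move=> /implyP /(_ Hab).
move=> /allP /(_ t); rewrite mem_iota Ht => /(_ isT).
move=> /allP /(_ q); rewrite mem_iota Hq0; apply.
by apply: leq_ltn_trans Hq _.
Qed.

Lemma nondivcheck_spec r a b b' : 0 < r -> r < 11 -> a < 4 -> b < 4 -> b' < 4 ->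
  exists2 k, k < 11 & (a + cc k) %% 4 != (if k + r < 11 then (b + cc (k + r)) %% 4
                                      else (b' + cc (k + r - 11)) %% 4).
Proof.
move=> Hr0 Hr Ha Hb Hb'.
have := nondivcheck_ok.
move=> /allP /(_ r); rewrite mem_iota Hr0 => /(_ Hr).
move=> /allP /(_ a); rewrite mem_iota Ha => /(_ isT).
move=> /allP /(_ b); rewrite mem_iota Hb => /(_ isT).
move=> /allP /(_ b'); rewrite mem_iota Hb' => /(_ isT).
move=> /hasP [k]; rewrite mem_iota => Hk Hne; exists k => //.
Qed.

Definition per i p q := forall k, k + q < p -> hw (i + k) = hw (i + k + q).

Lemma base_case i q : 0 < q -> q <= 41 -> per i ((3 * q) %/ 2 + 1) q -> False.
Proof.
move=> Hq0 Hq Hp.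
have Ei := divn_eq i 121; have Ht := ltn_pmod i (isT : 0 < 121).
move: (i %/ 121) (i %% 121) Ei Ht => m t Ei Ht.
have := @basecheck_spec (hw m) (hw m.+1) t q (hw_lt4 m) (hw_lt4 m.+1) _ Ht Hq0 Hq.
rewrite eq_sym hw_neq => /(_ isT) /negP; apply; apply/allP => k; rewrite mem_iota add0n => Hk.
have Hk' : k + q < (3 * q) %/ 2 + 1 by lia.
have Hp3 : (3 * q) %/ 2 + 1 <= 62 by lia.
have := Hp k Hk'; rewrite Ei.
have -> : m * 121 + t + k = 121 * m + (t + k) by lia.
have -> : 121 * m + (t + k) + q = 121 * m + (t + k + q) by lia.
rewrite !hwW; last 2 first.
- lia.
- lia.
by move=> ->.
Qed.

Lemma mod4_cancel x y c : x < 4 -> y < 4 -> (x + c) %% 4 = (y + c) %% 4 -> x = y.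
Proof.
move=> Hx Hy /eqP; rewrite eqn_modDr => /eqP.
by rewrite !modn_small.
Qed.

Lemma key q : 0 < q -> forall i p, 3 * q < 2 * p -> per i p q -> False.
Proof.
elim/ltn_ind: q => q IH Hq0 i p H3 Hper.
have [Hsmall|Hbig] := leqP p (q + 21).
  apply: (@base_case i q Hq0); first by lia.
  move=> k Hk; apply: Hper; lia.
have Eq := divn_eq q 11; have Hr := ltn_pmod q (isT : 0 < 11).
move: (q %/ 11) (q %% 11) Eq Hr => q' r Eq Hr.
have Ei := divn_eq i 11; have Hir := ltn_pmod i (isT : 0 < 11).
move: (i %/ 11) (i %% 11) Ei Hir => i' ir Ei Hir.
have [Hr0|Hr0] := posnP r.
  have Hq'0 : 0 < q' by lia.
  have Ej := divn_eq (i + p - 1) 11; have Hjr := ltn_pmod (i + p - 1) (isT : 0 < 11).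
  move: ((i + p - 1) %/ 11) ((i + p - 1) %% 11) Ej Hjr => j' jr Ej Hjr.
  apply: (IH q' _ Hq'0 i' (j' - i' + 1)); first by lia.
    lia.
  move=> k Hk.
  have [j [Hj1 Hj2 Hj3 Hj4]] : exists j, [/\ 11*(i'+k) <= j, i <= j, j <= 11*(i'+k)+10 & j + q < i+p].
    by case: (leqP (11*(i'+k)) i) => H; [exists i | exists (11*(i'+k))]; split; lia.
  have := Hper (j - i); rewrite subnKC // => /(_ ltac:(lia)).
  have -> : j = 11 * (i' + k) + (j - 11 * (i' + k)) by lia.
  have -> : 11 * (i' + k) + (j - 11 * (i' + k)) + q = 11 * (i' + k + q') + (j - 11 * (i' + k)) by lia.
  rewrite !hw_rec; last 2 first.
  - lia.
  - lia.
  by move/mod4_cancel => ->; rewrite ?hw_lt4 // addnA.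
have [k Hk] := @nondivcheck_spec r (hw (i' + 1)) (hw (i' + 1 + q')) (hw (i' + 1 + q' + 1))
  ltac:(lia) Hr (hw_lt4 _) (hw_lt4 _) (hw_lt4 _).
apply/negP; rewrite negbK.
have := Hper (11 * (i' + 1) + k - i) ltac:(lia).
have -> : i + (11 * (i' + 1) + k - i) = 11 * (i' + 1) + k by lia.
rewrite hw_rec //; move=> ->; apply/eqP.
case: ifP => Hkr.
  have -> : 11 * (i' + 1) + k + q = 11 * (i' + 1 + q') + (k + r) by lia.
  by rewrite hw_rec.
have -> : 11 * (i' + 1) + k + q = 11 * (i' + 1 + q' + 1) + (k + r - 11) by move/negbT: Hkr; lia.
by rewrite hw_rec //; move/negbT: Hkr; lia.
Qed.

Lemma rat_lt (p q : nat) : 0 < q -> (3%:Q / 2%:Q < p%:Q / q%:Q)%R -> 3 * q < 2 * p.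
Proof.
move=> Hq.
have H2 : (0 < 2%:Q)%R by [].
have Hq' : (0 < q%:Q)%R by rewrite ltr0z.
rewrite (ltr_pdivrMr _ _ H2) mulrAC (ltr_pdivlMr _ _ Hq').
rewrite -!intrM ltr_int => H; lia.
Qed.

Lemma rev_h w : all (fun x => x < 4) w -> rev (h w) = h (rev w).
Proof.
elim: w => //= a w IH /andP[Ha Hw].
rewrite h_cons rev_cat IH // rev_cons -cats1 h_cat.
have -> : rev (h_letter a) = h_letter a by do 4?[case: a Ha => [|a] Ha //].
by rewrite /h /= cats0.
Qed.

Lemma pal_hn n : palindrome (hn n).
Proof.
elim: n => // n IH; rewrite /palindrome in IH *.
change (rev (h (hn n)) == h (hn n)); by rewrite rev_h ?all_hn // (eqP IH).
Qed.

Lemma part2 : forall i p q : nat, (3%:Q / 2%:Q < p%:Q / q%:Q)%R ->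
     ~ is_power (hw_factor i p) p q.
Proof.
move=> i p q Hlt [Hq Hqp Hs Hper].
have H3 := @rat_lt p q Hq Hlt.
apply: (@key q Hq i p H3) => k Hk.
have := Hper k; rewrite Hs => /(_ Hk).
by rewrite /hw_factor !nth_mkseq ?addnA //; lia.
Qed.

Theorem mainTheorem8 :
  (forall a, a < 4 -> palindrome (h_letter a)) /\
  (forall i p q : nat, (3%:Q / 2%:Q < p%:Q / q%:Q)%R ->
     ~ is_power (hw_factor i p) p q) /\
  (forall n : nat, 1 <= n ->
     [/\ palindrome (hn n), size (hn n) = 11 ^ n &
         critical_exponent_is (hn n) (3%:Q / 2%:Q)%R]).
Proof.
split; first by move=> a Ha; do 4?[case: a Ha => [|a] Ha //].
split; first exact: part2.
move=> n Hn; split; [exact: pal_hn | exact: size_hn |split].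
  exists [:: 1; 3; 1], 3, 2; split => //.
    have [r ->] := @hn_prefix_le 1 n Hn; apply: infix_catr; by [].
  split => //; rewrite /has_period; case=> [|[|i]] //= H; lia.
move=> x p q /infixP [s [s' Hx0]] Hpow.
have Hx : hn n = (s ++ x ++ s' : seq nat) := Hx0.
have Ex : x = hw_factor (size s) p.
  case: Hpow => _ _ Hs _.
  apply: (@eq_from_nth _ 0); first by rewrite size_mkseq.
  move=> k; rewrite Hs => Hk.
  rewrite /hw_factor nth_mkseq // -(@nth_hn n); last by rewrite Hx !size_cat Hs ltn_add2l ltn_addr.
  by rewrite Hx nth_cat ifF ?addKn ?nth_cat ?Hs ?Hk //; apply/negbTE; rewrite -leqNgt leq_addr.
rewrite leNgt; apply/negP => Hlt; apply: (@part2 (size s) p q Hlt); by rewrite -Ex.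
Qed.
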